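(* Let $m\ge 4$ and let $K\ne\Delta_{[m]}$ be a simplicial complex on $[m]$ with $f_0(K)=f_0(K^\vee)=m$. If $\chi(\mathrm{Bier}(K))=m-1$, then $\mathrm{Bier}(K)$ is a weak suspension.
   Context: A simplicial complex $K$ on $[m]=\{1,\dots,m\}$ is a nonempty family of subsets of $[m]$ closed under taking subsets; $V(K)=\{i:\{i\}\in K\}$, $f_0(K)=|V(K)|$. $\Delta_{[m]}=2^{[m]}$. Let $[m']=\{1',\dots,m'\}$ be a disjoint copy of $[m]$, $I'=\{i':i\in I\}$. For $K\ne\Delta_{[m]}$ the Alexander dual $K^\vee$ is the complex on $[m']$ with $J'\in K^\vee$ iff $[m]\setminus J\notin K$. The Bier sphere $\mathrm{Bier}(K)$ is the complex on $[m]\sqcup[m']$ with faces $I\sqcup J'$, $I\in K$, $J'\in K^\vee$, $I\cap J=\varnothing$. The chromatic number $\chi(L)$ is the least number of colors in a map $c\colon V(L)\to C$ with $c(u)\ne c(v)$ whenever $\{u,v\}\in L$. A complex $L$ is a weak suspension if there exist distinct $a,b\in V(L)$ with $\{a,b\}\notin L$ such that each of $a,b$ forms an edge of $L$ with every vertex of $V(L)\setminus\{a,b\}$. *)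

(* Defs.v *)
From mathcomp Require Import all_boot.
Set Implicit Arguments. Unset Strict Implicit. Unset Printing Implicit Defensive.

Section Complexes.
Variable T : finType.

Definition is_complex (K : {set {set T}}) : Prop :=
  K != set0 /\ forall I J : {set T}, I \in K -> J \subset I -> J \in K.

Definition vertices (L : {set {set T}}) : {set T} := [set v | [set v] \in L].

Definition f0 (L : {set {set T}}) : nat := #|vertices L|.

(* proper colorings with colors 'I_k, defined on V(L) (encoded with option,
   None off V(L)) *)
Definition colorable (L : {set {set T}}) (k : nat) : bool :=
  [exists c : {ffun T -> option 'I_k},
     [forall v, (v \in vertices L) ==> (c v != None)] &&
     [forall u, forall v,
        [&& u \in vertices L, v \in vertices L, u != v & [set u; v] \in L]
        ==> (c u != c v)]].

(* least k with a proper k-coloring; #|T| colors always suffice *)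
Definition chromatic_number (L : {set {set T}}) : nat :=
  find (colorable L) (iota 0 #|T|.+1).

Definition weak_suspension (L : {set {set T}}) : Prop :=
  exists a b : T,
    [/\ a \in vertices L, b \in vertices L, a != b, [set a; b] \notin L &
      forall v, v \in vertices L -> v != a -> v != b ->
        [set a; v] \in L /\ [set b; v] \in L].
End Complexes.

Definition full_simplex (m : nat) : {set {set 'I_m}} := setT.

(* Alexander dual, on the copy [m'] (represented again by 'I_m):
   J' in K^vee iff [m] \ J notin K. *)
Definition alex_dual (m : nat) (K : {set {set 'I_m}}) : {set {set 'I_m}} :=
  [set J | ~: J \notin K].

(* Bier sphere on [m] ⊔ [m'] = 'I_m + 'I_m (inl = unprimed, inr = primed). *)
Definition bier (m : nat) (K : {set {set 'I_m}}) : {set {set ('I_m + 'I_m)%type}} :=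
  [set (inl @: I) :|: (inr @: J) | I : {set 'I_m} in K, J : {set 'I_m} in alex_dual K
      & [disjoint I & J]].

(* Main.v *)
Require Import Defs.
From mathcomp Require Import all_boot zify.
Set Implicit Arguments. Unset Strict Implicit. Unset Printing Implicit Defensive.

Lemma collide (T T': finType) (f: T->T') (A: {set T}) :
  #|f @: A| < #|A| -> exists x y, [/\ x \in A, y \in A, x != y & f x = f y].
Proof.
move=> H.
case: (boolP [exists x in A, exists y in A, (x != y) && (f x == f y)]).
  move/exists_inP => [x Hx /exists_inP [y Hy /andP [nxy /eqP e]]].
  by exists x, y.
move/exists_inPn => Hn.
have inj: {in A &, injective f}.
  move=> x y Hx Hy e; apply/eqP/negPn/negP => nxy.
  by move: (Hn x Hx) => /exists_inPn /(_ y Hy); rewrite nxy e eqxx.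
by rewrite card_in_imset // ltnn in H.
Qed.

Section C.
Variable m : nat.
Variable C : finType.
Variables cL cR : 'I_m -> C.
Hypothesis F1 : forall i j, i != j -> cL i != cR j.
Hypothesis cross : forall i j k l, i != j -> k != l -> cL i = cL j -> cR k = cR l ->
  [|| i == k, i == l, j == k | j == l].
Hypothesis count : #|cL @: [set: 'I_m] :|: cR @: [set: 'I_m]| < m.

Lemma triple : exists x y z, [/\ x != y, y != z, z != x, cL x = cL y /\ cL y = cL z &
   cR x = cR y /\ cR y = cR z].
Proof.
set D := [set i | cL i == cR i]; set N := ~: D.
set SD := cL @: D; set SL := cL @: N; set SR := cR @: N.
have sub : SD :|: SL :|: SR \subset cL @: [set: 'I_m] :|: cR @: [set: 'I_m].
  apply/subsetP => c; rewrite !inE => /orP [/orP [] | ] /imsetP [i _ ->].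
  - by rewrite imset_f.
  - by rewrite imset_f.
  - by apply/orP; right; apply: imset_f.
have cD : #|SD| = #|D|.
  apply: card_in_imset => i j; rewrite !inE => _ /eqP Hj e.
  by apply/eqP/negPn/negP => /F1; rewrite e Hj eqxx.
have d1 : SD :&: SL = set0.
  apply/setP => c; rewrite !inE; apply/negP => /andP [/imsetP [i Hi ->] /imsetP [j Hj e]].
  move: Hi Hj; rewrite !inE => /eqP Hi Hj.
  have : i != j by apply: contraNneq Hj => <-; rewrite Hi.
  by rewrite eq_sym => /F1; rewrite -e -Hi eqxx.
have d2 : SD :&: SR = set0.
  apply/setP => c; rewrite !inE; apply/negP => /andP [/imsetP [i Hi ->] /imsetP [j Hj e]].
  move: Hi Hj; rewrite !inE => /eqP Hi Hj.
  have : i != j by apply: contraNneq Hj => <-; rewrite Hi.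
  by move/F1; rewrite e eqxx.
have d3 : SL :&: SR = set0.
  apply/setP => c; rewrite !inE; apply/negP => /andP [/imsetP [i Hi ->] /imsetP [j Hj e]].
  move: Hi Hj; rewrite !inE => Hi Hj.
  have : i != j by apply: contraNneq Hi => eij; rewrite e eij.
  by move/F1; rewrite e eqxx.
have cU : #|SD :|: SL :|: SR| = #|D| + #|SL| + #|SR|.
  have h1 := cardsUI SD SL; rewrite d1 cards0 addn0 in h1.
  have h2 := cardsUI (SD :|: SL) SR; rewrite setIUl d2 d3 setU0 cards0 addn0 in h2.
  by rewrite h2 h1 cD.
have cDN : #|D| + #|N| = m by rewrite cardsC card_ord.
have key : #|SL| + #|SR| < #|N|.
  have := subset_leq_card sub; rewrite cU; lia.
have sd2 : forall (x y : 'I_m) (A : {set 'I_m}), #|A| <= #|A :\ x :\ y| + 2.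
  move=> x y A; rewrite (cardsD1 x A) (cardsD1 y (A :\ x)) addnA [_ + 2]addnC.
  by apply: leq_add; [exact: (leq_add (leq_b1 _) (leq_b1 _)) | exact: leqnn].
have [x [y [Hx Hy nxy exy]]] : exists x y, [/\ x \in N, y \in N, x != y & cL x = cL y].
  apply: collide; exact: (leq_ltn_trans (leq_addr _ _) key).
have [k [l [Hk Hl nkl ekl]]] : exists x y, [/\ x \in N, y \in N, x != y & cR x = cR y].
  apply: collide; exact: (leq_ltn_trans (leq_addl _ _) key).
have bR : #|N| <= #|SR| + 2.
  have injR : {in N :\ x :\ y &, injective cR}.
    move=> u v; rewrite !inE => /and3P [nuy nux _] /and3P [nvy nvx _] e.
    apply/eqP/negPn/negP => nuv.
    move: (cross nxy nuv exy e).
    by rewrite ![x == _]eq_sym ![y == _]eq_sym (negbTE nux) (negbTE nuy) (negbTE nvx) (negbTE nvy).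
  have := card_in_imset injR.
  have := subset_leq_card (imsetS cR (subset_trans (subD1set _ _) (subD1set _ _)) : cR @: (N :\ x :\ y) \subset SR).
  have := sd2 x y N. move=> h1 h2 h3; apply: leq_trans h1 _; rewrite leq_add2r -h3; exact: h2.
have bL : #|N| <= #|SL| + 2.
  have injL : {in N :\ k :\ l &, injective cL}.
    move=> u v; rewrite !inE => /and3P [nuy nux _] /and3P [nvy nvx _] e.
    apply/eqP/negPn/negP => nuv.
    move: (cross nuv nkl e ekl).
    by rewrite (negbTE nux) (negbTE nuy) (negbTE nvx) (negbTE nvy).
  have := card_in_imset injL.
  have := subset_leq_card (imsetS cL (subset_trans (subD1set _ _) (subD1set _ _)) : cL @: (N :\ k :\ l) \subset SL).
  have := sd2 k l N. move=> h1 h2 h3; apply: leq_trans h1 _; rewrite leq_add2r -h3; exact: h2.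
have gL : 0 < #|SL| by apply/card_gt0P; exists (cL x); rewrite imset_f.
have gR : 0 < #|SR| by apply/card_gt0P; exists (cR x); rewrite imset_f.
have lL : #|SL| <= 1 by lia.
have lR : #|SR| <= 1 by lia.
have : 2 < #|N| by lia.
move/card_gt2P => [a [b [c [[Ha Hb Hc] [nab nbc nca]]]]].
move/card_le1_eqP: lL => eL; move/card_le1_eqP: lR => eR.
exists a, b, c; split => //; [split; apply: eL | split; apply: eR]; exact: imset_f.
Qed.
End C.
Section S.
Variable m : nat.
Variable K : {set {set 'I_m}}.
Hypothesis cK : is_complex K.
Hypothesis nfull : K != full_simplex m.

Lemma down (I J : {set 'I_m}) : I \in K -> J \subset I -> J \in K.
Proof. by case: cK => _ H; apply: H. Qed.

Lemma set0K : set0 \in K.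
Proof.
case: cK => /set0Pn [I HI] H; exact: H HI (sub0set _).
Qed.

Lemma setTnK : [set: 'I_m] \notin K.
Proof.
apply/negP => HT; move/negP: nfull; apply; apply/eqP/setP => I.
by rewrite /full_simplex inE (down HT (subsetT I)).
Qed.

Lemma in_dual J : (J \in alex_dual K) = (~: J \notin K).
Proof. by rewrite /alex_dual inE. Qed.

Lemma bierP I J : I \in K -> J \in alex_dual K -> [disjoint I & J] ->
  inl @: I :|: inr @: J \in bier K.
Proof. by move=> HI HJ HD; apply/imset2P; exists I J => //; rewrite inE HJ. Qed.

Lemma inl_imset (I : {set 'I_m}) i : (inl i \in (inl @: I : {set ('I_m + 'I_m)%type})) = (i \in I).
Proof.
apply/imsetP/idP => [[x Hx [->]] //|Hi]; by exists i.
Qed.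
Lemma inr_imset (I : {set 'I_m}) i : (inr i \in (inr @: I : {set ('I_m + 'I_m)%type})) = (i \in I).
Proof.
apply/imsetP/idP => [[x Hx [->]] //|Hi]; by exists i.
Qed.
Lemma inl_imsetr (I : {set 'I_m}) i : (inl i \in (inr @: I : {set ('I_m + 'I_m)%type})) = false.
Proof. by apply/imsetP => -[x _]. Qed.
Lemma inr_imsetl (I : {set 'I_m}) i : (inr i \in (inl @: I : {set ('I_m + 'I_m)%type})) = false.
Proof. by apply/imsetP => -[x _]. Qed.

Lemma E1 i j : [set i] \in K -> [set j] \in alex_dual K -> i != j ->
  [set inl i; inr j] \in bier K.
Proof.
move=> Hi Hj Hij.
have -> : [set inl i; inr j] = inl @: [set i] :|: inr @: [set j] :> {set ('I_m + 'I_m)%type}.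
  by rewrite !imset_set1.
apply: bierP => //; rewrite disjoint_sym disjoints1 inE eq_sym //.
Qed.

Lemma E2 i j : [set i; j] \in K -> [set inl i; inl j] \in bier K.
Proof.
move=> H.
have -> : [set inl i; inl j] = inl @: [set i; j] :|: inr @: set0 :> {set ('I_m + 'I_m)%type}.
  by rewrite imset0 setU0 imsetU !imset_set1.
apply: bierP => //; last by rewrite -setI_eq0 setI0.
by rewrite in_dual setC0 setTnK.
Qed.

Lemma E3 i j : [set i; j] \in alex_dual K -> [set inr i; inr j] \in bier K.
Proof.
move=> H.
have -> : [set inr i; inr j] = inl @: set0 :|: inr @: [set i; j] :> {set ('I_m + 'I_m)%type}.
  by rewrite imset0 set0U imsetU !imset_set1.
apply: bierP => //; first exact: set0K.
by rewrite -setI_eq0 set0I.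
Qed.

Lemma NE i : [set inl i; inr i] \notin bier K.
Proof.
apply/negP => /imset2P [I J HI]; rewrite inE => /andP [HJ HD] E.
have h1 : inl i \in [set inl i; inr i] by rewrite !inE eqxx.
have h2 : inr i \in [set inl i; inr i] by rewrite !inE eqxx orbT.
rewrite E !inE inl_imset inl_imsetr orbF in h1.
rewrite E !inE inr_imset inr_imsetl /= in h2.
by move/disjointFr: HD => /(_ _ h1); rewrite h2.
Qed.

Lemma one u v i j : u != v -> [set u; v] \notin K -> ~: [set u; v] \in K ->
  i != u -> i != v -> j != u -> j != v ->
  [set i; j] \in K /\ ~: [set i; j] \notin K.
Proof.
move=> nuv h1 h2 iu iv ju jv; split.
  apply: (down h2); apply/subsetP => w; rewrite !inE => /orP [] /eqP ->;
  by rewrite negb_or ?iu ?iv ?ju ?jv.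
apply/negP => H; move/negP: h1; apply; apply: (down H).
apply/subsetP => w; rewrite !inE => /orP [] /eqP ->;
by rewrite negb_or eq_sym ?iu ?iv ?ju ?jv // eq_sym ?iu ?iv ?ju ?jv.
Qed.

End S.

Theorem mainTheorem8 (m : nat) (K : {set {set 'I_m}}) :
  4 <= m ->
  is_complex K ->
  K != full_simplex m ->
  f0 K = m ->
  f0 (alex_dual K) = m ->
  chromatic_number (bier K) = m - 1 ->
  weak_suspension (bier K).
Proof.
move=> m4 cK nfull fK fD hchi.
have VK : forall i, [set i] \in K.
  move=> i; have : vertices K = setT.
    by apply/eqP; rewrite eqEcard subsetT cardsT card_ord; rewrite /f0 in fK; rewrite fK leqnn.
  by move/setP/(_ i); rewrite !inE.
have VD : forall i, [set i] \in alex_dual K.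
  move=> i; have : vertices (alex_dual K) = setT.
    by apply/eqP; rewrite eqEcard subsetT cardsT card_ord; rewrite /f0 in fD; rewrite fD leqnn.
  by move/setP/(_ i); rewrite !inE.
have VB : forall v, v \in vertices (bier K).
  case=> i; rewrite inE.
  - by have := E2 cK nfull (i:=i) (j:=i); rewrite !setUid; apply; apply: VK.
  - by have := E3 cK (i:=i) (j:=i); rewrite !setUid; apply; apply: VD.
have col : colorable (bier K) (m - 1).
  have hs : has (colorable (bier K)) (iota 0 #|{: ('I_m + 'I_m)%type}|.+1).
    rewrite has_find.
    have -> : find (colorable (bier K)) (iota 0 #|{: ('I_m + 'I_m)%type}|.+1) = m - 1 by exact: hchi.
    rewrite size_iota card_sum card_ord; lia.
  have := nth_find 0 hs.
  have -> : find (colorable (bier K)) (iota 0 #|{: ('I_m + 'I_m)%type}|.+1) = m - 1 by exact: hchi.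
  rewrite nth_iota //; rewrite card_sum card_ord; lia.
case/existsP: col => c /andP [/forallP cNone /forallP cP].
have cprop : forall u v, u != v -> [set u; v] \in bier K -> c u != c v.
  move=> u v nuv huv; have := cP u => /forallP /(_ v).
  by rewrite !VB nuv huv.
set cL := fun i => c (inl i); set cR := fun i => c (inr i).
have F1 : forall i j, i != j -> cL i != cR j.
  move=> i j nij; apply: cprop => //; exact: E1.
have F2 : forall i j, i != j -> cL i = cL j -> [set i; j] \notin K.
  move=> i j nij e; apply/negP => H.
  have nl : (inl i : ('I_m + 'I_m)%type) != inl j by apply: contra nij => /eqP [->].
  by move: (cprop _ _ nl (E2 cK nfull H)); rewrite /cL in e; rewrite e eqxx.
have F3 : forall i j, i != j -> cR i = cR j -> ~: [set i; j] \in K.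
  move=> i j nij e; apply/negPn/negP => H.
  have H' : [set i; j] \in alex_dual K by rewrite in_dual.
  have nl : (inr i : ('I_m + 'I_m)%type) != inr j by apply: contra nij => /eqP [->].
  by move: (cprop _ _ nl (E3 cK H')); rewrite /cR in e; rewrite e eqxx.
have cross : forall i j k l, i != j -> k != l -> cL i = cL j -> cR k = cR l ->
  [|| i == k, i == l, j == k | j == l].
  move=> i j k l nij nkl e1 e2; apply/negPn/negP; rewrite !negb_or => /and4P [ik il jk jl].
  move/negP: (F2 _ _ nij e1); apply; apply: (down cK (F3 _ _ nkl e2)).
  apply/subsetP => w; rewrite !inE => /orP [] /eqP ->; by rewrite negb_or ?ik ?il ?jk ?jl.
have count : #|cL @: [set: 'I_m] :|: cR @: [set: 'I_m]| < m.
  have sub : cL @: [set: 'I_m] :|: cR @: [set: 'I_m] \subset [set~ None].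
    apply/subsetP => o; rewrite !inE => /orP [] /imsetP [i _ ->].
    - by have := cNone (inl i); rewrite VB.
    - by have := cNone (inr i); rewrite VB.
  apply: leq_ltn_trans (subset_leq_card sub) _.
  rewrite cardsC1 card_option card_ord; lia.
have [x [y [z [nxy nyz nzx [exy eyz] [rxy ryz]]]]] := triple F1 cross count.
have [i Hi] : exists i, i \notin [set x; y; z].
  have : 0 < #|~: [set x; y; z]|.
    have h3 : #|[set x; y; z]| <= 3.
      have h1 := cardsUI ([set x] :|: [set y]) [set z].
      have h2 := cardsUI [set x] [set y]. rewrite !cards1 in h1 h2. lia.
    have := cardsC [set x; y; z]; rewrite card_ord; lia.
  by case/card_gt0P => i; rewrite inE => Hi; exists i.
move: Hi; rewrite !inE !negb_or => /andP [/andP [ix iy] iz].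
have good : forall j, j != i -> [set i; j] \in K /\ ~: [set i; j] \notin K.
  move=> j nji.
  have Pxy := (conj (F2 _ _ nxy exy) (F3 _ _ nxy rxy)).
  have Pyz := (conj (F2 _ _ nyz eyz) (F3 _ _ nyz ryz)).
  have nxz : x != z by rewrite eq_sym.
  have Pxz := (conj (F2 _ _ nxz (etrans exy eyz)) (F3 _ _ nxz (etrans rxy ryz))).
  have [jx|jx] := eqVneq j x.
    subst j; case: Pyz => h1 h2; apply: (one cK nyz h1 h2) => //; by rewrite eq_sym.
  have [jy|jy] := eqVneq j y.
    subst j; case: Pxz => h1 h2; apply: (one cK nxz h1 h2) => //; by rewrite eq_sym.
  case: Pxy => h1 h2; apply: (one cK nxy h1 h2) => //.
exists (inl i), (inr i); split => //; first exact: NE.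
case=> j _ h1 h2.
- have nij : j != i by apply: contraNneq h1 => ->.
  have [g _] := good j nij.
  split; first exact (E2 cK nfull g).
  by rewrite setUC; apply: E1 => //; rewrite eq_sym.
- have nij : j != i by apply: contraNneq h2 => ->.
  have [_ g] := good j nij.
  split; first by apply: E1 => //; rewrite eq_sym.
  have g2 : [set i; j] \in alex_dual K by rewrite in_dual.
  exact (E3 cK g2).
Qed.
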